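(* Let $v_1\ge v_2\ge\cdots\ge v_n\ge 0$ be reals with $v_1>0$, and let $k=\max\{i:v_i>v_1/2\}$. For each $i\in[n]$ define $$B_i=\frac{\log_2^\dagger(2v_i/v_1)}{k+1}+\sum_{j=1}^k\frac{\log_2^\dagger(v_i/v_j)}{j(j+1)}.$$ Then $\sum_{i=1}^nB_i\le1$.
   Context: $\log_2^\dagger(\alpha)=\max(0,\min(1,\log_2\alpha))$ for $\alpha\ge 0$, with $\log_2 0=-\infty$ (so $\log_2^\dagger(0)=0$). *)

(* Defs.v *)
From Stdlib Require Import Reals.
Open Scope R_scope.

Definition log2 (x : R) : R := ln x / ln 2.

(* log2^dagger(a) = max(0, min(1, log2 a)) for a >= 0, with log2 0 = -oo,
   so log2^dagger(0) = 0.  For a <= 0 we return 0. *)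
Definition log2dag (a : R) : R :=
  if Rle_dec a 0 then 0 else Rmax 0 (Rmin 1 (log2 a)).

(* B_i with 1-based sequence v and parameter k *)
Definition Bval (v : nat -> R) (k i : nat) : R :=
  log2dag (2 * v i / v 1%nat) / INR (k + 1)
  + sum_f 1 k (fun j => log2dag (v i / v j) / (INR j * (INR j + 1))).

(* Main.v *)
Require Import Defs.
From Stdlib Require Import Reals Lra Lia.
Open Scope R_scope.

Lemma ln2_pos : 0 < ln 2.
Proof. pose proof ln_lt_2; lra. Qed.

Lemma ln_le' x y : 0 < x -> x <= y -> ln x <= ln y.
Proof. intros Hx Hxy. destruct (Req_dec x y) as [->|Hne]; [lra|].
  left; apply ln_increasing; lra. Qed.

Lemma ln_div' x y : 0 < x -> 0 < y -> ln (x / y) = ln x - ln y.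
Proof. intros; unfold Rdiv; rewrite ln_mult, ln_Rinv; try lra.
  apply Rinv_0_lt_compat; lra. Qed.

Lemma log2dag_le1 a : a <= 1 -> log2dag a = 0.
Proof.
  intros H. unfold log2dag. destruct (Rle_dec a 0); [reflexivity|].
  assert (ln a <= 0) by (rewrite <- ln_1; apply ln_le'; lra).
  assert (log2 a <= 0).
  { unfold log2, Rdiv. pose proof ln2_pos.
    assert (0 < / ln 2) by (apply Rinv_0_lt_compat; lra).
    nra. }
  unfold Rmin, Rmax. destruct (Rle_dec 1 (log2 a)); destruct (Rle_dec 0 _); lra.
Qed.

Lemma log2dag_12 a : 1 <= a <= 2 -> log2dag a = log2 a.
Proof.
  intros H. unfold log2dag. destruct (Rle_dec a 0); [lra|].
  assert (0 <= ln a) by (rewrite <- ln_1; apply ln_le'; lra).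
  assert (ln a <= ln 2) by (apply ln_le'; lra).
  pose proof ln2_pos.
  assert (0 <= log2 a <= 1).
  { unfold log2; split.
    - apply Rmult_le_pos; [lra|left; apply Rinv_0_lt_compat; lra].
    - apply (Rmult_le_reg_r (ln 2)); [lra|]. unfold Rdiv.
      rewrite Rmult_assoc, Rinv_l; lra. }
  unfold Rmin, Rmax. destruct (Rle_dec 1 (log2 a)); destruct (Rle_dec 0 _); lra.
Qed.

Lemma log2_div x y : 0 < x -> 0 < y -> log2 (x / y) = log2 x - log2 y.
Proof. intros; unfold log2; rewrite ln_div' by lra. field. pose proof ln2_pos; lra. Qed.

Lemma log2_2div x y : 0 < x -> 0 < y -> log2 (2 * x / y) = 1 + log2 x - log2 y.
Proof. intros; unfold log2; rewrite ln_div', ln_mult by lra. field. pose proof ln2_pos; lra. Qed.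

Lemma sum_zero f m : (forall i, (i <= m)%nat -> f i = 0) -> sum_f_R0 f m = 0.
Proof. induction m; intros H; simpl. apply H; lia.
  rewrite IHm, (H (S m)); [lra|lia|]. intros; apply H; lia. Qed.

Lemma sum_nonpos f m : (forall i, (i <= m)%nat -> f i <= 0) -> sum_f_R0 f m <= 0.
Proof. induction m; intros H; simpl. apply H; lia.
  pose proof (H (S m) (le_n _)). assert (sum_f_R0 f m <= 0) by (apply IHm; intros; apply H; lia). lra. Qed.

Lemma sumS f m : sum_f_R0 f (S m) = sum_f_R0 f m + f (S m).
Proof. reflexivity. Qed.

Lemma D_ident (L : nat -> R) K :
  sum_f_R0 (fun i => sum_f_R0 (fun j => if Nat.ltb i j then (L i - L j)/((INR j+1)*(INR j+2)) else 0) K) K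
  = sum_f_R0 (fun i => L i /((INR i+1)*(INR i+2))) K - sum_f_R0 L K / (INR K + 2).
Proof.
  induction K.
  - simpl. field.
  - set (cc := (INR (S K) + 1) * (INR (S K) + 2)).
    assert (Hc : 0 < cc) by (unfold cc; pose proof (pos_INR (S K)); nra).
    transitivity (sum_f_R0 (fun i => sum_f_R0 (fun j => if Nat.ltb i j then (L i - L j)/((INR j+1)*(INR j+2)) else 0) K) K
       + sum_f_R0 (fun i => (L i - L (S K)) * / cc) K).
    + rewrite sumS.
      rewrite (sum_zero (fun j => if Nat.ltb (S K) j then _ else 0)).
      2:{ intros j Hj. destruct (Nat.ltb_spec (S K) j); [lia|reflexivity]. }
      rewrite Rplus_0_r, <- sum_plus. apply sum_eq. intros i Hi. rewrite sumS.
      destruct (Nat.ltb_spec i (S K)); [|lia]. unfold cc, Rdiv. reflexivity.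
    + rewrite IHK, (sum_eq (fun i => (L i - L (S K)) * / cc) (fun i => L i * / cc - L (S K) * / cc)) by (intros; ring).
      rewrite minus_sum, sum_cte, <- scal_sum.
      rewrite !sumS. unfold cc. rewrite !S_INR. field.
      pose proof (pos_INR K). split; lra.
Qed.

Theorem mainTheorem12 (n : nat) (v : nat -> R) (k : nat)
  (Hn : (1 <= n)%nat)
  (Hmono : forall i, (1 <= i < n)%nat -> v (S i) <= v i)
  (Hnonneg : forall i, (1 <= i <= n)%nat -> 0 <= v i)
  (Hv1 : 0 < v 1%nat)
  (Hk : (1 <= k <= n)%nat)
  (Hvk : v k > v 1%nat / 2)
  (Hkmax : forall i, (k < i <= n)%nat -> ~ (v i > v 1%nat / 2)) :
  sum_f 1 n (fun i => Bval v k i) <= 1.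
Proof.
  assert (Hmon : forall i j, (1 <= i <= j)%nat -> (j <= n)%nat -> v j <= v i).
  { intros i j Hij Hjn. induction j. lia.
    destruct (Nat.eq_dec i (S j)) as [->|Hne]; [lra|].
    pose proof (Hmono j ltac:(lia)). pose proof (IHj ltac:(lia) ltac:(lia)). lra. }
  destruct k as [|K]; [lia|].
  set (M := fun x => log2 (v (x+1)%nat) - log2 (v 1%nat)).
  assert (Hpos : forall x, (x <= K)%nat -> v 1%nat / 2 < v (x+1)%nat <= v 1%nat).
  { intros x Hx. split.
    - pose proof (Hmon (x+1)%nat (S K) ltac:(lia) ltac:(lia)). lra.
    - apply Hmon; lia. }
  assert (C1 : forall x, (x <= K)%nat -> Bval v (S K) (x+1) =
    (1 + M x) * / (INR K + 2) + sum_f_R0 (fun y => if Nat.ltb x y then (M x - M y)/((INR y+1)*(INR y+2)) else 0) K).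
  { intros x Hx. unfold Bval, sum_f. replace (S K - 1)%nat with K by lia.
    pose proof (Hpos x Hx).
    rewrite log2dag_12.
    2:{ split.
        - apply (Rmult_le_reg_r (v 1%nat)); [lra|]. unfold Rdiv. rewrite Rmult_assoc, Rinv_l; lra.
        - apply (Rmult_le_reg_r (v 1%nat)); [lra|]. unfold Rdiv. rewrite Rmult_assoc, Rinv_l; lra. }
    rewrite log2_2div by lra.
    replace (INR (S K + 1)) with (INR K + 2) by (rewrite plus_INR, S_INR; simpl; ring).
    unfold Rdiv at 1. f_equal. unfold M; ring.
    apply sum_eq. intros y Hy. pose proof (Hpos y Hy).
    replace (INR (y + 1)) with (INR y + 1) by (rewrite plus_INR; simpl; ring).
    replace (INR y + 1 + 1) with (INR y + 2) by ring.
    destruct (Nat.ltb_spec x y).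
    - rewrite log2dag_12.
      + rewrite log2_div by lra. f_equal. unfold M; ring.
      + assert (v (y+1)%nat <= v (x+1)%nat) by (apply Hmon; lia).
        split.
        * apply (Rmult_le_reg_r (v (y+1)%nat)); [lra|]. unfold Rdiv. rewrite Rmult_assoc, Rinv_l; lra.
        * apply (Rmult_le_reg_r (v (y+1)%nat)); [lra|]. unfold Rdiv. rewrite Rmult_assoc, Rinv_l; lra.
    - rewrite log2dag_le1. unfold Rdiv; ring.
      assert (v (x+1)%nat <= v (y+1)%nat) by (apply Hmon; lia).
      apply (Rmult_le_reg_r (v (y+1)%nat)); [lra|]. unfold Rdiv. rewrite Rmult_assoc, Rinv_l; lra. }
  assert (C2 : forall x, (K < x <= n - 1)%nat -> Bval v (S K) (x+1) = 0).
  { intros x Hx. unfold Bval, sum_f.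
    assert (H1 : v (x+1)%nat <= v 1%nat / 2) by (pose proof (Hkmax (x+1)%nat ltac:(lia)); lra).
    assert (H0 : 0 <= v (x+1)%nat) by (apply Hnonneg; lia).
    rewrite log2dag_le1.
    2:{ apply (Rmult_le_reg_r (v 1%nat)); [lra|]. unfold Rdiv. rewrite Rmult_assoc, Rinv_l; lra. }
    rewrite sum_zero. unfold Rdiv; ring.
    intros y Hy. rewrite log2dag_le1. unfold Rdiv; ring.
    replace (S K - 1)%nat with K in Hy by lia.
    pose proof (Hpos y Hy).
    assert (v (x+1)%nat <= v (y+1)%nat) by (apply Hmon; lia).
    apply (Rmult_le_reg_r (v (y+1)%nat)); [lra|]. unfold Rdiv. rewrite Rmult_assoc, Rinv_l; lra. }
  assert (Main : sum_f_R0 (fun x => Bval v (S K) (x+1)) K <= 1).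
  { rewrite (sum_eq _ _ K C1), sum_plus, D_ident.
    rewrite (sum_eq _ (fun x => / (INR K + 2) + M x * / (INR K + 2))).
    2:{ intros; ring. }
    rewrite sum_plus, sum_cte, <- scal_sum, S_INR.
    assert (sum_f_R0 (fun i => M i / ((INR i + 1) * (INR i + 2))) K <= 0).
    { apply sum_nonpos. intros i Hi. pose proof (Hpos i Hi).
      assert (M i <= 0).
      { unfold M, log2. pose proof ln2_pos.
        assert (ln (v (i+1)%nat) <= ln (v 1%nat)) by (apply ln_le'; lra).
        unfold Rdiv. rewrite <- Rmult_minus_distr_r.
        assert (0 < / ln 2) by (apply Rinv_0_lt_compat; lra). nra. }
      pose proof (pos_INR i).
      assert (0 < / ((INR i + 1) * (INR i + 2))) by (apply Rinv_0_lt_compat; nra).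
      unfold Rdiv; nra. }
    pose proof (pos_INR K).
    assert (/ (INR K + 2) * (INR K + 1) <= 1).
    { apply (Rmult_le_reg_l (INR K + 2)); [lra|]. rewrite <- Rmult_assoc, Rinv_r; lra. }
    lra. }
  unfold sum_f.
  destruct (Nat.eq_dec (S K) n) as [<-|Hlt].
  - replace (S K - 1)%nat with K by lia. exact Main.
  - rewrite (tech2 _ K (n-1)) by lia.
    rewrite (sum_zero (fun i => Bval v (S K) (S K + i + 1))). lra.
    intros i Hi. apply C2. lia.
Qed.
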